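(* Let $U\subseteq\mathbb{R}^8$ be open, let $\Theta\in C^\infty(U)$ satisfy the 4+4-dimensional TED equation $$\omega_{12}\omega_{34}+\omega_{23}\omega_{14}+\omega_{31}\omega_{24}=0\quad\text{on }U,$$ and assume $\omega_{12}\neq 0$ on $U$. Fix a constant $\lambda$ and put $D_i=\partial_{y^i}-\lambda\partial_{x^i}$ for $i=1,\dots,4$. Define the first-order operators $$X_3=\omega_{23}D_1+\omega_{31}D_2+\omega_{12}D_3,\qquad X_4=\omega_{24}D_1+\omega_{41}D_2+\omega_{12}D_4 .$$ The Lax pair $X_3\psi=0$, $X_4\psi=0$, written out as $$(\Theta_{x^1y^2}-\Theta_{x^2y^1})(\psi_{y^3}-\lambda\psi_{x^3})+(\Theta_{x^2y^3}-\Theta_{x^3y^2})(\psi_{y^1}-\lambda\psi_{x^1})+(\Theta_{x^3y^1}-\Theta_{x^1y^3})(\psi_{y^2}-\lambda\psi_{x^2})=0,$$ $$(\Theta_{x^1y^2}-\Theta_{x^2y^1})(\psi_{y^4}-\lambda\psi_{x^4})+(\Theta_{x^2y^4}-\Theta_{x^4y^2})(\psi_{y^1}-\lambda\psi_{x^1})+(\Theta_{x^4y^1}-\Theta_{x^1y^4})(\psi_{y^2}-\lambda\psi_{x^2})=0,$$ is then compatible. Precisely: there are smooth functions $\alpha,\beta$ on $U$ with $[X_3,X_4]=\alpha X_3+\beta X_4$.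
   Context: Coordinates on $\mathbb{R}^8$ are $(x^1,\dots,x^4,y^1,\dots,y^4)$, and subscripts denote partial derivatives. For $\Theta\in C^\infty(U)$ set $\omega_{ik}=\Theta_{x^iy^k}-\Theta_{x^ky^i}$, so that $\omega_{ik}=-\omega_{ki}$. The 4+4-dimensional TED equation is $\omega_{12}\omega_{34}+\omega_{23}\omega_{14}+\omega_{31}\omega_{24}=0$, i.e. the vanishing of the Pfaffian of the skew-symmetric $4\times4$ matrix $\omega=(\omega_{ik})$. *)

(* Defs.v *)
From Stdlib Require Import Reals ClassicalEpsilon.
From mathcomp Require Import ssreflect ssrfun ssrbool eqtype ssrnat seq fintype.
Set Implicit Arguments.
Unset Strict Implicit.

Open Scope R_scope.

(* Points of R^8; coordinate j : 'I_8.  x^i (i=1..4) is coordinate i-1,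
   y^i (i=1..4) is coordinate i+3. *)
Definition pt := 'I_8 -> R.

Definition xc (i : nat) : 'I_8 := inord (i.-1).
Definition yc (i : nat) : 'I_8 := inord (i + 3).

Definition shift (p : pt) (i : 'I_8) (t : R) : pt :=
  fun j => if j == i then p j + t else p j.

Definition is_open (U : pt -> Prop) : Prop :=
  forall p, U p -> exists eps, 0 < eps /\
    forall q : pt, (forall j, Rabs (q j - p j) < eps) -> U q.

Definition has_pd (f : pt -> R) (i : 'I_8) (p : pt) (l : R) : Prop :=
  derivable_pt_lim (fun t => f (shift p i t)) 0 l.

Definition ex_pd (f : pt -> R) (i : 'I_8) (p : pt) : Prop :=
  exists l, has_pd f i p l.

(* The partial derivative function (meaningful where it exists) *)
Definition pd (f : pt -> R) (i : 'I_8) : pt -> R :=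
  fun p => epsilon (inhabits 0) (fun l => has_pd f i p l).

(* iterated partial derivative: iter_pd [:: i1; ...; ik] f = d_i1 (... (d_ik f)) *)
Definition iter_pd (l : seq 'I_8) (f : pt -> R) : pt -> R :=
  foldr (fun i g => pd g i) f l.

Definition cont_on (U : pt -> Prop) (g : pt -> R) : Prop :=
  forall p, U p -> forall eps, 0 < eps -> exists d, 0 < d /\
    forall q, U q -> (forall j, Rabs (q j - p j) < d) -> Rabs (g q - g p) < eps.

Definition smooth_on (U : pt -> Prop) (f : pt -> R) : Prop :=
  forall l : seq 'I_8,
    (forall p, U p -> forall i, ex_pd (iter_pd l f) i p) /\ cont_on U (iter_pd l f).

Definition omega (Th : pt -> R) (i k : nat) : pt -> R :=
  fun p => pd (pd Th (xc i)) (yc k) p - pd (pd Th (xc k)) (yc i) p.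

Definition Dop (lam : R) (i : nat) (psi : pt -> R) : pt -> R :=
  fun p => pd psi (yc i) p - lam * pd psi (xc i) p.

Definition X3 (Th : pt -> R) (lam : R) (psi : pt -> R) : pt -> R :=
  fun p => omega Th 2 3 p * Dop lam 1 psi p + omega Th 3 1 p * Dop lam 2 psi p
           + omega Th 1 2 p * Dop lam 3 psi p.

Definition X4 (Th : pt -> R) (lam : R) (psi : pt -> R) : pt -> R :=
  fun p => omega Th 2 4 p * Dop lam 1 psi p + omega Th 4 1 p * Dop lam 2 psi p
           + omega Th 1 2 p * Dop lam 4 psi p.

(* Main.v *)
Require Import Defs.
From Stdlib Require Import Reals Lra ClassicalEpsilon FunctionalExtensionality PropExtensionality.
From mathcomp Require Import ssreflect ssrfun ssrbool eqtype ssrnat seq fintype.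
Open Scope R_scope.
Set Implicit Arguments.
Unset Strict Implicit.


Lemma shift0 p i : shift p i 0 = p.
Proof. apply functional_extensionality => j; rewrite /shift; case: (j == i) => //; ring. Qed.

Lemma shift_add p i s u : shift (shift p i s) i u = shift p i (s + u).
Proof. apply functional_extensionality => j; rewrite /shift; case: (j == i) => //; ring. Qed.

Lemma shift_comm p i j s t : shift (shift p i s) j t = shift (shift p j t) i s.
Proof. apply functional_extensionality => k; rewrite /shift;
  case: (k == i); case: (k == j) => //; ring. Qed.

Lemma shift_dist p i t j : Rabs (shift p i t j - p j) <= Rabs t.
Proof. rewrite /shift; case: (j == i).
  - replace (p j + t - p j) with t by ring; lra.
  - rewrite Rminus_diag Rabs_R0; apply Rabs_pos. Qed.

Lemma shift2_dist p a b s t j : Rabs (shift (shift p a s) b t j - p j) <= Rabs s + Rabs t.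
Proof.
  have h1 := shift_dist (shift p a s) b t j.
  have h2 := shift_dist p a s j.
  replace (shift (shift p a s) b t j - p j) with
    ((shift (shift p a s) b t j - shift p a s j) + (shift p a s j - p j)) by ring.
  eapply Rle_trans; first by apply Rabs_triang. lra.
Qed.

Lemma dpl_ext f g x l l' : (forall t, f t = g t) -> l = l' ->
  derivable_pt_lim f x l -> derivable_pt_lim g x l'.
Proof. move=> H <-. have -> : g = f by apply functional_extensionality => t; rewrite H. done. Qed.

Lemma has_pd_pd f i p l : has_pd f i p l -> pd f i p = l.
Proof.
  move=> H. rewrite /pd.
  have H2 : has_pd f i p (epsilon (inhabits 0) (fun l => has_pd f i p l)).
  { apply (epsilon_spec (inhabits 0) (fun l => has_pd f i p l)). by exists l. }
  exact: (uniqueness_limite _ _ _ _ H2 H).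
Qed.

Lemma ex_pd_has f i p : ex_pd f i p -> has_pd f i p (pd f i p).
Proof. move=> [l H]. by rewrite (has_pd_pd H). Qed.

Definition near_eq (f g : pt -> R) (p : pt) :=
  exists r, 0 < r /\ forall q, (forall j, Rabs (q j - p j) < r) -> f q = g q.

Lemma has_pd_local f g i p l : near_eq f g p -> has_pd f i p l -> has_pd g i p l.
Proof.
  move=> [r [Hr Hfg]] H eps Heps.
  have [d Hd] := H eps Heps.
  have Hm : 0 < Rmin d r by apply Rmin_pos; [apply cond_pos|lra].
  exists (mkposreal _ Hm) => h Hh0 Hh.
  simpl in Hh.
  have Hhd : Rabs h < d by eapply Rlt_le_trans; [apply Hh| apply Rmin_l].
  have Hhr : Rabs h < r by eapply Rlt_le_trans; [apply Hh| apply Rmin_r].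
  have E1 : f (shift p i (0 + h)) = g (shift p i (0 + h)).
  { apply Hfg => j; eapply Rle_lt_trans; [apply shift_dist| ]; by rewrite Rplus_0_l. }
  have E2 : f (shift p i 0) = g (shift p i 0).
  { apply Hfg => j; rewrite shift0 Rminus_diag Rabs_R0; lra. }
  rewrite -E1 -E2. by apply Hd.
Qed.

Lemma pd_local f g i p : near_eq f g p -> pd f i p = pd g i p.
Proof.
  move=> H. rewrite /pd.
  have -> : (fun l => has_pd f i p l) = (fun l => has_pd g i p l); last by [].
  apply functional_extensionality => l; apply propositional_extensionality; split.
  - by apply has_pd_local.
  - apply has_pd_local. case: H => r [Hr H]; exists r; split => // q Hq; by rewrite H.
Qed.

Lemma ex_pd_local f g i p : near_eq f g p -> ex_pd f i p -> ex_pd g i p.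
Proof. move=> H [l Hl]; exists l; exact: has_pd_local H Hl. Qed.

Lemma near_eq_open U f g p : is_open U -> U p -> (forall q, U q -> f q = g q) -> near_eq f g p.
Proof. move=> HU Hp H. have [e [He He']] := HU p Hp. exists e; split => // q Hq; apply H, He', Hq. Qed.



Lemma has_pd_add f g i p : ex_pd f i p -> ex_pd g i p ->
  has_pd (fun q => f q + g q) i p (pd f i p + pd g i p).
Proof.
  move=> /ex_pd_has Hf /ex_pd_has Hg.
  exact: (derivable_pt_lim_plus _ _ _ _ _ Hf Hg).
Qed.

Lemma has_pd_sub f g i p : ex_pd f i p -> ex_pd g i p ->
  has_pd (fun q => f q - g q) i p (pd f i p - pd g i p).
Proof.
  move=> /ex_pd_has Hf /ex_pd_has Hg.
  exact: (derivable_pt_lim_minus _ _ _ _ _ Hf Hg).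
Qed.

Lemma has_pd_mul f g i p : ex_pd f i p -> ex_pd g i p ->
  has_pd (fun q => f q * g q) i p (pd f i p * g p + f p * pd g i p).
Proof.
  move=> /ex_pd_has Hf /ex_pd_has Hg.
  have H := (derivable_pt_lim_mult _ _ _ _ _ Hf Hg).
  move: H; rewrite /mult_fct shift0 => H. exact H.
Qed.

Lemma has_pd_const c i p : has_pd (fun _ => c) i p 0.
Proof. exact: (derivable_pt_lim_const c 0). Qed.

Lemma has_pd_scal c f i p : ex_pd f i p ->
  has_pd (fun q => c * f q) i p (c * pd f i p).
Proof. move=> /ex_pd_has Hf. exact: (derivable_pt_lim_scal _ c _ _ Hf). Qed.

Lemma has_pd_inv f i p : ex_pd f i p -> f p <> 0 ->
  has_pd (fun q => / f q) i p (- pd f i p * (/ f p * / f p)).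
Proof.
  move=> /ex_pd_has Hf Hn.
  have Hc := derivable_pt_lim_const 1 0.
  have H := derivable_pt_lim_div _ _ _ _ _ Hc Hf.
  move: H; rewrite /div_fct /fct_cte shift0 => H.
  eapply dpl_ext; last by apply H.
  - move=> t /=; rewrite /Rdiv; ring.
  - rewrite /Rsqr; field; done.
Qed.



Lemma cont_const U c : cont_on U (fun _ => c).
Proof. move=> p Hp eps He; exists 1; split; [lra|] => q _ _; rewrite Rminus_diag Rabs_R0; lra. Qed.

Lemma cont_ext U f g : cont_on U f -> (forall q, U q -> f q = g q) -> cont_on U g.
Proof.
  move=> Hf H p Hp eps He. have [d [Hd Hd']] := Hf p Hp eps He.
  exists d; split => // q Hq Hqp. rewrite -!H //. by apply Hd'.
Qed.

Lemma min_close (d1 d2 : R) (q p : pt) : (forall j, Rabs (q j - p j) < Rmin d1 d2) ->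
  (forall j, Rabs (q j - p j) < d1) /\ (forall j, Rabs (q j - p j) < d2).
Proof. move=> H; split => j; eapply Rlt_le_trans; try apply H; [apply Rmin_l|apply Rmin_r]. Qed.

Lemma cont_add U f g : cont_on U f -> cont_on U g -> cont_on U (fun q => f q + g q).
Proof.
  move=> Hf Hg p Hp eps He.
  have [d1 [Hd1 H1]] := Hf p Hp (eps/2) ltac:(lra).
  have [d2 [Hd2 H2]] := Hg p Hp (eps/2) ltac:(lra).
  exists (Rmin d1 d2); split; first by apply Rmin_pos.
  move=> q Hq /min_close [Hq1 Hq2].
  have A := H1 q Hq Hq1. have B := H2 q Hq Hq2.
  replace (f q + g q - (f p + g p)) with ((f q - f p) + (g q - g p)) by ring.
  eapply Rle_lt_trans; first by apply Rabs_triang. lra.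
Qed.

Lemma cont_mul U f g : cont_on U f -> cont_on U g -> cont_on U (fun q => f q * g q).
Proof.
  move=> Hf Hg p Hp eps He.
  set A := Rabs (f p) + 1. set B := Rabs (g p) + 1.
  have HAd : A = Rabs (f p) + 1 by [].
  have HBd : B = Rabs (g p) + 1 by [].
  have HA : 0 < A by have := Rabs_pos (f p); rewrite /A; lra.
  have HB : 0 < B by have := Rabs_pos (g p); rewrite /B; lra.
  have He1 : 0 < Rmin 1 (eps / (2 * B)).
  { apply Rmin_pos; [lra|]. apply Rdiv_lt_0_compat; lra. }
  have He2 : 0 < eps / (2 * A) by apply Rdiv_lt_0_compat; lra.
  have [d1 [Hd1 H1]] := Hf p Hp _ He1.
  have [d2 [Hd2 H2]] := Hg p Hp _ He2.
  exists (Rmin d1 d2); split; first by apply Rmin_pos.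
  move=> q Hq /min_close [Hq1 Hq2].
  have F1 := H1 q Hq Hq1. have G1 := H2 q Hq Hq2.
  have F2 : Rabs (f q - f p) < 1 by eapply Rlt_le_trans; [apply F1|apply Rmin_l].
  have F3 : Rabs (f q - f p) < eps / (2 * B) by eapply Rlt_le_trans; [apply F1|apply Rmin_r].
  have Ffq : Rabs (f q) <= A.
  { have := Rabs_triang (f q - f p) (f p). replace (f q - f p + f p) with (f q) by ring.
    rewrite /A; lra. }
  replace (f q * g q - f p * g p) with (f q * (g q - g p) + g p * (f q - f p)) by ring.
  eapply Rle_lt_trans; first by apply Rabs_triang. rewrite !Rabs_mult.
  have T1 : Rabs (f q) * Rabs (g q - g p) <= A * (eps / (2 * A)).
  { apply Rmult_le_compat; try apply Rabs_pos; lra. }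
  have T2 : Rabs (g p) * Rabs (f q - f p) <= B * (eps / (2 * B)).
  { apply Rmult_le_compat; try apply Rabs_pos; lra. }
  have E1 : A * (eps / (2 * A)) = eps / 2 by field; lra.
  have E2 : B * (eps / (2 * B)) = eps / 2 by field; lra.
  have T3 : Rabs (g p) * Rabs (f q - f p) < B * (eps / (2 * B)).
  { case: (Req_dec (g p) 0) => Hz.
    - rewrite Hz Rabs_R0 Rmult_0_l E2; lra.
    - apply Rmult_le_0_lt_compat; try apply Rabs_pos; lra. }
  lra.
Qed.

Lemma cont_inv U f : cont_on U f -> (forall q, U q -> f q <> 0) -> cont_on U (fun q => / f q).
Proof.
  move=> Hf Hn p Hp eps He.
  set a := Rabs (f p).
  have Ha : 0 < a by apply Rabs_pos_lt, Hn.
  have He1 : 0 < Rmin (a / 2) (eps * a * a / 2).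
  { apply Rmin_pos; [lra|]. have : 0 < eps * a * a by repeat apply Rmult_lt_0_compat. lra. }
  have [d [Hd H]] := Hf p Hp _ He1.
  exists d; split => // q Hq Hqp.
  have F1 := H q Hq Hqp.
  have F2 : Rabs (f q - f p) < a / 2 by eapply Rlt_le_trans; [apply F1|apply Rmin_l].
  have F3 : Rabs (f q - f p) < eps * a * a / 2 by eapply Rlt_le_trans; [apply F1|apply Rmin_r].
  have Fq : a / 2 <= Rabs (f q).
  { have := Rabs_triang (f p - f q) (f q). replace (f p - f q + f q) with (f p) by ring.
    rewrite Rabs_minus_sym in F2. rewrite -/a. lra. }
  have Hq0 : f q <> 0 by apply Hn.
  replace (/ f q - / f p) with ((f p - f q) * (/ f q * / f p)) by (field; split; auto).
  rewrite Rabs_mult Rabs_mult !Rabs_inv -/a Rabs_minus_sym.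
  have Hfq : 0 < Rabs (f q) by lra.
  have I1 : / Rabs (f q) <= 2 / a.
  { apply (Rmult_le_reg_l (Rabs (f q))) => //. rewrite Rinv_r; last lra.
    apply (Rmult_le_reg_l a) => //. field_simplify; lra. }
  have I2 : 0 < / Rabs (f q) by apply Rinv_0_lt_compat.
  have I3 : 0 < / a by apply Rinv_0_lt_compat.
  apply (Rle_lt_trans _ (Rabs (f q - f p) * (2 / a * / a))).
  - apply Rmult_le_compat_l; first apply Rabs_pos. apply Rmult_le_compat_r; lra.
  - apply (Rlt_le_trans _ (eps * a * a / 2 * (2 / a * / a))).
    + apply Rmult_lt_compat_r => //. apply Rmult_lt_0_compat => //. apply Rdiv_lt_0_compat; lra.
    + right; field; lra.
Qed.



Inductive Cl (U : pt -> Prop) : (pt -> R) -> Prop :=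
| Cl_base f : smooth_on U f -> Cl U f
| Cl_const c : Cl U (fun _ => c)
| Cl_add f g : Cl U f -> Cl U g -> Cl U (fun q => f q + g q)
| Cl_mul f g : Cl U f -> Cl U g -> Cl U (fun q => f q * g q)
| Cl_inv f : Cl U f -> (forall q, U q -> f q <> 0) -> Cl U (fun q => / f q)
| Cl_ext f g : Cl U f -> (forall q, U q -> f q = g q) -> Cl U g.

Lemma iter_pd_rcons l i f : iter_pd (rcons l i) f = iter_pd l (pd f i).
Proof. by rewrite -cats1 /iter_pd foldr_cat. Qed.

Lemma smooth_pd U f i : smooth_on U f -> smooth_on U (pd f i).
Proof. move=> H l. rewrite -iter_pd_rcons. apply H. Qed.

Lemma Cl_prop U f : is_open U -> Cl U f ->
  cont_on U f /\ (forall p, U p -> forall i, ex_pd f i p) /\ forall i, Cl U (pd f i).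
Proof.
  move=> HU; elim.
  - move=> g Hg. split; [exact: (proj2 (Hg [::]))|split].
    + exact: (proj1 (Hg [::])).
    + move=> i; apply Cl_base, smooth_pd, Hg.
  - move=> c. split; [apply cont_const|split].
    + move=> p _ i; exists 0; apply has_pd_const.
    + move=> i; apply (Cl_ext (Cl_const U 0)) => q _. by rewrite (has_pd_pd (has_pd_const c i q)).
  - move=> g h _ [Cg [Dg Pg]] _ [Ch [Dh Ph]]. split; [exact: cont_add|split].
    + move=> p Hp i; eexists; apply has_pd_add; auto.
    + move=> i; apply (Cl_ext (Cl_add (Pg i) (Ph i))) => q Hq.
      by rewrite (has_pd_pd (has_pd_add (Dg q Hq i) (Dh q Hq i))).
  - move=> g h Hg [Cg [Dg Pg]] Hh [Ch [Dh Ph]]. split; [exact: cont_mul|split].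
    + move=> p Hp i; eexists; apply has_pd_mul; auto.
    + move=> i; apply (Cl_ext (Cl_add (Cl_mul (Pg i) Hh) (Cl_mul Hg (Ph i)))) => q Hq.
      by rewrite (has_pd_pd (has_pd_mul (Dg q Hq i) (Dh q Hq i))).
  - move=> g Hg [Cg [Dg Pg]] Hn. split; [exact: cont_inv|split].
    + move=> p Hp i; eexists; apply has_pd_inv; auto.
    + move=> i; apply (Cl_ext (Cl_mul (Cl_mul (Cl_const U (-1)) (Pg i))
                          (Cl_mul (Cl_inv Hg Hn) (Cl_inv Hg Hn)))) => q Hq.
      rewrite (has_pd_pd (has_pd_inv (Dg q Hq i) (Hn q Hq))); ring.
  - move=> g h _ [Cg [Dg Pg]] E. split; [exact: cont_ext E|split].
    + move=> p Hp i; apply (ex_pd_local (f:=g)); last by auto.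
      exact: (near_eq_open HU Hp E).
    + move=> i; apply (Cl_ext (Pg i)) => q Hq; apply pd_local; exact: (near_eq_open HU Hq E).
Qed.

Lemma Cl_iter U l f : is_open U -> Cl U f -> Cl U (iter_pd l f).
Proof.
  move=> HU Hf; elim: l => [|i l IH] //=.
  exact: (proj2 (proj2 (Cl_prop HU IH)) i).
Qed.

Lemma Cl_smooth U f : is_open U -> Cl U f -> smooth_on U f.
Proof.
  move=> HU Hf l. have [C [D _]] := Cl_prop HU (Cl_iter l HU Hf). by split.
Qed.

Lemma Cl_ex_pd U f p i : is_open U -> Cl U f -> U p -> ex_pd f i p.
Proof. move=> HU Hf Hp. exact: (proj1 (proj2 (Cl_prop HU Hf)) p Hp i). Qed.

Lemma Cl_pd U f i : is_open U -> Cl U f -> Cl U (pd f i).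
Proof. move=> HU Hf. exact: (proj2 (proj2 (Cl_prop HU Hf)) i). Qed.

Lemma Cl_sub U f g : Cl U f -> Cl U g -> Cl U (fun q => f q - g q).
Proof.
  move=> Hf Hg. apply (Cl_ext (Cl_add Hf (Cl_mul (Cl_const U (-1)) Hg))) => q _; ring.
Qed.

Lemma Cl_scal U c f : Cl U f -> Cl U (fun q => c * f q).
Proof. move=> Hf. exact: (Cl_mul (Cl_const U c) Hf). Qed.

Lemma Cl_opp U f : Cl U f -> Cl U (fun q => - f q).
Proof. move=> Hf. apply (Cl_ext (Cl_scal (-1) Hf)) => q _; ring. Qed.



Lemma dpl_shift (F : pt -> R) a (phi : R -> pt) c :
  (forall u, phi (c + u) = shift (phi c) a u) -> ex_pd F a (phi c) ->
  derivable_pt_lim (fun s => F (phi s)) c (pd F a (phi c)).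
Proof.
  move=> Hphi /ex_pd_has H eps He. have [d Hd] := H eps He.
  exists d => h Hh0 Hh. have := Hd h Hh0 Hh.
  by rewrite Rplus_0_l shift0 Hphi.
Qed.

Lemma smooth_ex_pd U f p i : smooth_on U f -> U p -> ex_pd f i p.
Proof. move=> H Hp. exact: (proj1 (H [::]) p Hp i). Qed.

Lemma delta_mvt U f p r a b h k : smooth_on U f -> 0 < r ->
  (forall q, (forall j, Rabs (q j - p j) < r) -> U q) ->
  0 < h < r / 2 -> 0 < k < r / 2 ->
  exists xi eta, 0 < xi < h /\ 0 < eta < k /\
    f (shift (shift p a h) b k) - f (shift p a h) - f (shift p b k) + f p
    = h * k * pd (pd f a) b (shift (shift p a xi) b eta).
Proof.
  move=> Hf Hr Hball Hh Hk.
  have inU : forall s t, 0 <= s <= h -> 0 <= t <= k -> U (shift (shift p a s) b t).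
  { move=> s t Hs Ht; apply Hball => j. eapply Rle_lt_trans; first apply shift2_dist.
    rewrite !Rabs_right; lra. }
  have inU1 : forall s, 0 <= s <= h -> U (shift p a s).
  { move=> s Hs. have := inU s 0 Hs ltac:(lra). by rewrite shift0. }
  set g := fun s => f (shift (shift p a s) b k) - f (shift p a s).
  set g' := fun s => pd f a (shift (shift p a s) b k) - pd f a (shift p a s).
  have Hg : forall c, 0 <= c <= h -> derivable_pt_lim g c (g' c).
  { move=> c Hc. apply (derivable_pt_lim_minus (fun s => f (shift (shift p a s) b k))
                         (fun s => f (shift p a s))).
    - apply (dpl_shift (phi := fun s => shift (shift p a s) b k)).
      + move=> u. by rewrite -shift_add shift_comm.
      + apply: smooth_ex_pd Hf _. apply inU; lra.
    - apply (dpl_shift (phi := fun s => shift p a s)).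
      + move=> u. by rewrite -shift_add.
      + apply: smooth_ex_pd Hf _. apply inU1; lra. }
  have [xi [Hxi Hxi']] := MVT_cor2 g g' 0 h ltac:(lra) Hg.
  set m := fun t => pd f a (shift (shift p a xi) b t).
  set m' := fun t => pd (pd f a) b (shift (shift p a xi) b t).
  have Hm : forall c, 0 <= c <= k -> derivable_pt_lim m c (m' c).
  { move=> c Hc. apply (dpl_shift (phi := fun t => shift (shift p a xi) b t)).
    + move=> u. by rewrite -shift_add.
    + apply: smooth_ex_pd (smooth_pd a Hf) _. apply inU; lra. }
  have [eta [Heta Heta']] := MVT_cor2 m m' 0 k ltac:(lra) Hm.
  exists xi, eta; split => //; split => //.
  move: Hxi Heta; rewrite /g /g' /m /m' !shift0 => Hxi Heta.
  have E : f (shift (shift p a h) b k) - f (shift p a h) - f (shift p b k) + f p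
      = (pd f a (shift (shift p a xi) b k) - pd f a (shift p a xi)) * (h - 0) by lra.
  rewrite E Heta. ring.
Qed.

Lemma small_eq x y : (forall eps, 0 < eps -> Rabs (x - y) < 2 * eps) -> x = y.
Proof.
  move=> H. case: (Req_dec (x - y) 0) => Hz; first lra.
  have Ha : 0 < Rabs (x - y) by apply Rabs_pos_lt.
  have := H (Rabs (x - y) / 4) ltac:(lra). lra.
Qed.

Lemma clairaut U f a b p : is_open U -> smooth_on U f -> U p ->
  pd (pd f a) b p = pd (pd f b) a p.
Proof.
  move=> HU Hf Hp.
  have [r [Hr Hball]] := HU p Hp.
  apply small_eq => eps He.
  have [d1 [Hd1 H1]] := proj2 (Hf [:: b; a]) p Hp eps He.
  have [d2 [Hd2 H2]] := proj2 (Hf [:: a; b]) p Hp eps He.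
  set h := Rmin (r / 2) (Rmin d1 d2) / 2.
  have Hm : 0 < Rmin (r / 2) (Rmin d1 d2) by apply Rmin_pos; [lra|apply Rmin_pos].
  have Hm1 := Rmin_l (r / 2) (Rmin d1 d2).
  have Hm2 := Rmin_r (r / 2) (Rmin d1 d2).
  have Hm3 := Rmin_l d1 d2. have Hm4 := Rmin_r d1 d2.
  have hd : h = Rmin (r / 2) (Rmin d1 d2) / 2 by [].
  have Hh : 0 < h < r / 2 by lra.
  have [xi [eta [Hxi [Heta E1]]]] := delta_mvt a b Hf Hr Hball Hh Hh.
  have [xi' [eta' [Hxi' [Heta' E2]]]] := delta_mvt b a Hf Hr Hball Hh Hh.
  rewrite (shift_comm p b a h h) in E2.
  have Hclose : forall s t, 0 < s < h -> 0 < t < h -> forall c c', forall j,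
      Rabs (shift (shift p c s) c' t j - p j) < Rmin d1 d2.
  { move=> s t Hs Ht c c' j. eapply Rle_lt_trans; first apply shift2_dist.
    rewrite !Rabs_right; lra. }
  have inU : forall s t c c', 0 < s < h -> 0 < t < h -> U (shift (shift p c s) c' t).
  { move=> s t c c' Hs Ht; apply Hball => j. eapply Rle_lt_trans; first apply shift2_dist.
    rewrite !Rabs_right; lra. }
  have A1 := H1 _ (inU _ _ a b Hxi Heta) (fun j => Rlt_le_trans _ _ _ (Hclose _ _ Hxi Heta a b j) Hm3).
  have A2 := H2 _ (inU _ _ b a Hxi' Heta') (fun j => Rlt_le_trans _ _ _ (Hclose _ _ Hxi' Heta' b a j) Hm4).
  simpl in A1, A2.
  have Hhh : h * h <> 0 by apply Rmult_integral_contrapositive; lra.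
  have E : pd (pd f a) b (shift (shift p a xi) b eta) = pd (pd f b) a (shift (shift p b xi') a eta').
  { apply (Rmult_eq_reg_l (h * h)) => //. rewrite -E1 -E2. ring. }
  rewrite E in A1.
  have [B1 B2] := Rabs_def2 _ _ A1. have [B3 B4] := Rabs_def2 _ _ A2.
  apply Rabs_def1; lra.
Qed.



Lemma Cl_omega U Th i k : smooth_on U Th -> Cl U (omega Th i k).
Proof. move=> H; rewrite /omega; apply Cl_sub; apply Cl_base; do 2 apply smooth_pd; exact H. Qed.

Lemma Cl_Dop U lam i f : is_open U -> Cl U f -> Cl U (Dop lam i f).
Proof. move=> HU Hf; rewrite /Dop; apply Cl_sub; [|apply Cl_scal]; exact: Cl_pd. Qed.

Lemma Cl_X3 U Th lam f : is_open U -> smooth_on U Th -> Cl U f -> Cl U (X3 Th lam f).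
Proof.
  move=> HU HT Hf; rewrite /X3.
  repeat apply Cl_add; apply Cl_mul; (apply Cl_omega; done) || (apply Cl_Dop; done).
Qed.

Lemma Cl_X4 U Th lam f : is_open U -> smooth_on U Th -> Cl U f -> Cl U (X4 Th lam f).
Proof.
  move=> HU HT Hf; rewrite /X4.
  repeat apply Cl_add; apply Cl_mul; (apply Cl_omega; done) || (apply Cl_Dop; done).
Qed.

Lemma pd_sum3 f1 g1 f2 g2 f3 g3 c p :
  ex_pd f1 c p -> ex_pd g1 c p -> ex_pd f2 c p -> ex_pd g2 c p -> ex_pd f3 c p -> ex_pd g3 c p ->
  pd (fun q => f1 q * g1 q + f2 q * g2 q + f3 q * g3 q) c p =
  pd f1 c p * g1 p + f1 p * pd g1 c p + (pd f2 c p * g2 p + f2 p * pd g2 c p)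
  + (pd f3 c p * g3 p + f3 p * pd g3 c p).
Proof.
  move=> H1 H2 H3 H4 H5 H6.
  have M1 := has_pd_mul H1 H2. have M2 := has_pd_mul H3 H4. have M3 := has_pd_mul H5 H6.
  have S1 := has_pd_add (ex_intro _ _ M1) (ex_intro _ _ M2).
  rewrite (has_pd_pd M1) (has_pd_pd M2) in S1.
  have S2 := has_pd_add (ex_intro _ _ S1) (ex_intro _ _ M3).
  rewrite (has_pd_pd S1) (has_pd_pd M3) in S2.
  exact: has_pd_pd S2.
Qed.

Lemma Dop_sum3 lam j f1 g1 f2 g2 f3 g3 p :
  (forall c, ex_pd f1 c p) -> (forall c, ex_pd g1 c p) -> (forall c, ex_pd f2 c p) ->
  (forall c, ex_pd g2 c p) -> (forall c, ex_pd f3 c p) -> (forall c, ex_pd g3 c p) ->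
  Dop lam j (fun q => f1 q * g1 q + f2 q * g2 q + f3 q * g3 q) p =
  Dop lam j f1 p * g1 p + f1 p * Dop lam j g1 p + (Dop lam j f2 p * g2 p + f2 p * Dop lam j g2 p)
  + (Dop lam j f3 p * g3 p + f3 p * Dop lam j g3 p).
Proof.
  move=> H1 H2 H3 H4 H5 H6. rewrite /Dop !pd_sum3 //. ring.
Qed.

Lemma pd_sub f g c p : ex_pd f c p -> ex_pd g c p ->
  pd (fun q => f q - g q) c p = pd f c p - pd g c p.
Proof. move=> H1 H2; exact: has_pd_pd (has_pd_sub H1 H2). Qed.

Lemma pd_subscal f g lam c p : ex_pd f c p -> ex_pd g c p ->
  pd (fun q => f q - lam * g q) c p = pd f c p - lam * pd g c p.
Proof.
  move=> H1 H2. have H3 := has_pd_scal lam H2.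
  rewrite (has_pd_pd (has_pd_sub H1 (ex_intro _ _ H3))). by rewrite (has_pd_pd H3).
Qed.

Lemma DD_exp U psi lam i j p : is_open U -> smooth_on U psi -> U p ->
  Dop lam j (Dop lam i psi) p =
  pd (pd psi (yc i)) (yc j) p - lam * pd (pd psi (xc i)) (yc j) p
  - lam * (pd (pd psi (yc i)) (xc j) p - lam * pd (pd psi (xc i)) (xc j) p).
Proof.
  move=> HU Hs Hp. rewrite {1}/Dop /Dop.
  rewrite !pd_subscal //; apply: smooth_ex_pd Hp; exact: smooth_pd.
Qed.

Lemma DD_sym U psi lam i j p : is_open U -> smooth_on U psi -> U p ->
  Dop lam j (Dop lam i psi) p = Dop lam i (Dop lam j psi) p.
Proof.
  move=> HU Hs Hp. rewrite !(DD_exp lam _ _ HU Hs Hp).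
  rewrite (clairaut (yc i) (yc j) HU Hs Hp) (clairaut (xc i) (yc j) HU Hs Hp)
          (clairaut (yc i) (xc j) HU Hs Hp) (clairaut (xc i) (xc j) HU Hs Hp).
  ring.
Qed.



Lemma om_anti Th i k q : omega Th k i q = - omega Th i k q.
Proof. rewrite /omega; ring. Qed.

Lemma Dop_anti U Th lam i k j p : is_open U -> smooth_on U Th -> U p ->
  Dop lam j (omega Th k i) p = - Dop lam j (omega Th i k) p.
Proof.
  move=> HU HT Hp.
  have -> : omega Th k i = (fun q => (-1) * omega Th i k q).
  { apply functional_extensionality => q; rewrite om_anti; ring. }
  have E : forall c, pd (fun q => (-1) * omega Th i k q) c p = (-1) * pd (omega Th i k) c p.
  { move=> c; apply has_pd_pd, has_pd_scal. apply: Cl_ex_pd HU _ Hp. exact: Cl_omega. }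
  rewrite /Dop !E; ring.
Qed.

Definition T3 (Th : pt -> R) i k c p := pd (pd (pd Th (xc i)) (yc k)) c p.

Lemma pd_om U Th i k c p : smooth_on U Th -> U p ->
  pd (omega Th i k) c p = T3 Th i k c p - T3 Th k i c p.
Proof.
  move=> HT Hp. rewrite /omega pd_sub //; apply: (smooth_ex_pd (U:=U)) Hp; do 2 apply smooth_pd; exact HT.
Qed.

Lemma Ty_sym U Th i k j p : is_open U -> smooth_on U Th -> U p ->
  T3 Th i k (yc j) p = T3 Th i j (yc k) p.
Proof. move=> HU HT Hp. rewrite /T3. exact: (clairaut (yc k) (yc j) HU (smooth_pd (xc i) HT) Hp). Qed.

Lemma Tx_sym U Th i k j p : is_open U -> smooth_on U Th -> U p ->
  T3 Th i k (xc j) p = T3 Th j k (xc i) p.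
Proof.
  move=> HU HT Hp. rewrite /T3.
  rewrite (clairaut (yc k) (xc j) HU (smooth_pd (xc i) HT) Hp).
  rewrite (clairaut (yc k) (xc i) HU (smooth_pd (xc j) HT) Hp).
  apply pd_local. apply: (near_eq_open HU Hp) => q Hq. exact: (clairaut _ _ HU HT Hq).
Qed.

Lemma dcyc U Th lam j i k p : is_open U -> smooth_on U Th -> U p ->
  Dop lam j (omega Th i k) p + Dop lam i (omega Th k j) p + Dop lam k (omega Th j i) p = 0.
Proof.
  move=> HU HT Hp. rewrite /Dop !(pd_om _ _ _ HT Hp).
  rewrite (Ty_sym i k j HU HT Hp) (Ty_sym k j i HU HT Hp) (Ty_sym j i k HU HT Hp).
  rewrite (Tx_sym i k j HU HT Hp) (Tx_sym k j i HU HT Hp) (Tx_sym j i k HU HT Hp).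
  ring.
Qed.

Lemma dPf U Th lam j p : is_open U -> smooth_on U Th -> U p ->
  (forall q, U q ->
     omega Th 1 2 q * omega Th 3 4 q + omega Th 2 3 q * omega Th 1 4 q
     + omega Th 3 1 q * omega Th 2 4 q = 0) ->
  Dop lam j (fun q => omega Th 1 2 q * omega Th 3 4 q + omega Th 2 3 q * omega Th 1 4 q
     + omega Th 3 1 q * omega Th 2 4 q) p = 0.
Proof.
  move=> HU HT Hp HP.
  have E : forall c, pd (fun q => omega Th 1 2 q * omega Th 3 4 q + omega Th 2 3 q * omega Th 1 4 q
     + omega Th 3 1 q * omega Th 2 4 q) c p = 0.
  { move=> c. rewrite -(has_pd_pd (has_pd_const 0 c p)). apply pd_local.
    apply: (near_eq_open HU Hp) => q Hq. exact: HP. }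
  rewrite /Dop !E; ring.
Qed.

Unset Implicit Arguments.
Theorem theorem1 (U : pt -> Prop) (Th : pt -> R) (lam : R) :
  is_open U ->
  smooth_on U Th ->
  (forall p, U p ->
     omega Th 1 2 p * omega Th 3 4 p + omega Th 2 3 p * omega Th 1 4 p
     + omega Th 3 1 p * omega Th 2 4 p = 0) ->
  (forall p, U p -> omega Th 1 2 p <> 0) ->
  exists alpha beta : pt -> R,
    smooth_on U alpha /\ smooth_on U beta /\
    forall psi : pt -> R, smooth_on U psi ->
      forall p, U p ->
        X3 Th lam (X4 Th lam psi) p - X4 Th lam (X3 Th lam psi) p
        = alpha p * X3 Th lam psi p + beta p * X4 Th lam psi p.
Proof.
  move=> HU HT HP Hnz.
  exists (fun q => - X4 Th lam (omega Th 1 2) q * / omega Th 1 2 q).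
  exists (fun q => X3 Th lam (omega Th 1 2) q * / omega Th 1 2 q).
  have Cw : forall i k, Cl U (omega Th i k) by move=> i k; exact: Cl_omega.
  split; [|split].
  - apply (Cl_smooth HU). apply Cl_mul; [apply Cl_opp, Cl_X4 => //|apply Cl_inv => //].
  - apply (Cl_smooth HU). apply Cl_mul; [apply Cl_X3 => //|apply Cl_inv => //].
  move=> psi Hpsi p Hp.
  have Cpsi : Cl U psi by apply Cl_base.
  have Ex : forall f, Cl U f -> forall c, ex_pd f c p.
  { move=> f Hf c; exact: (Cl_ex_pd c HU Hf Hp). }
  have X3e : forall F, X3 Th lam F p = omega Th 2 3 p * Dop lam 1 F p + omega Th 3 1 p * Dop lam 2 F p
           + omega Th 1 2 p * Dop lam 3 F p by [].
  have X4e : forall F, X4 Th lam F p = omega Th 2 4 p * Dop lam 1 F p + omega Th 4 1 p * Dop lam 2 F p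
           + omega Th 1 2 p * Dop lam 4 F p by [].
  rewrite (X3e (X4 Th lam psi)) (X4e (X3 Th lam psi)).
  rewrite !(Dop_sum3 lam); try (apply Ex; first [apply Cw | apply Cl_Dop; [done|done]]).
  rewrite ?(DD_sym lam 1 2 HU Hpsi Hp) ?(DD_sym lam 1 3 HU Hpsi Hp) ?(DD_sym lam 1 4 HU Hpsi Hp)
          ?(DD_sym lam 2 3 HU Hpsi Hp) ?(DD_sym lam 2 4 HU Hpsi Hp) ?(DD_sym lam 3 4 HU Hpsi Hp).
  rewrite /X3 /X4.
  have R1 := dcyc lam 1 2 3 HU HT Hp.
  have R2 := dcyc lam 1 2 4 HU HT Hp.
  have R3 := dcyc lam 1 3 4 HU HT Hp.
  have R4 := dcyc lam 2 3 4 HU HT Hp.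
  rewrite (Dop_anti lam 3 1 4 HU HT Hp) in R3.
  rewrite (Dop_anti lam 2 4 3 HU HT Hp) in R4.
  have e1 : Dop lam 3 (omega Th 1 2) p = - Dop lam 1 (omega Th 2 3) p - Dop lam 2 (omega Th 3 1) p by lra.
  have e2 : Dop lam 4 (omega Th 1 2) p = - Dop lam 1 (omega Th 2 4) p - Dop lam 2 (omega Th 4 1) p by lra.
  have e3 : Dop lam 4 (omega Th 3 1) p = Dop lam 1 (omega Th 3 4) p + Dop lam 3 (omega Th 4 1) p by lra.
  have e4 : Dop lam 4 (omega Th 2 3) p = Dop lam 3 (omega Th 2 4) p - Dop lam 2 (omega Th 3 4) p by lra.
  rewrite e1 e2 e3 e4.
  have P1 := dPf lam 1 HU HT Hp HP.
  have P2 := dPf lam 2 HU HT Hp HP.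
  have P0 := HP p Hp.
  apply Rminus_diag_uniq.
  have Hw := Hnz p Hp.
  set PF := (fun q => omega Th 1 2 q * omega Th 3 4 q + omega Th 2 3 q * omega Th 1 4 q
     + omega Th 3 1 q * omega Th 2 4 q) in P1 P2.
  transitivity ((Dop lam 1 psi p * (omega Th 1 2 p * Dop lam 2 PF p - Dop lam 2 (omega Th 1 2) p * PF p)
     + Dop lam 2 psi p * (- (omega Th 1 2 p * Dop lam 1 PF p) + Dop lam 1 (omega Th 1 2) p * PF p))
     / omega Th 1 2 p).
  2: { rewrite P1 P2 /PF P0. field. exact Hw. }
  rewrite /PF !(Dop_sum3 lam); try (apply Ex; apply Cw).
  rewrite !(om_anti Th 4 1) !(Dop_anti lam 4 1 _ HU HT Hp).
  field. exact Hw.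
Qed.
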